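(* Consider the symmetric two-cell load coupling model described in the context, and let $\bm{\kappa}=(\kappa_1,\dots,\kappa_{2m})\in\{0,1\}^{2m}$ be a JT pattern such that $\kappa_j=\kappa_{m+j}$ for all $j\in\{1,\dots,m\}$. Suppose the coupled system for $\bm{\kappa}$ has a fixed point $(x_1,x_2)$ with $x_1,x_2>0$ (the load at convergence). Then the UE loads evaluated at this fixed point satisfy $y_j=y_{m+j}$ for every $j\in\{1,\dots,m\}$.
   Context: Two-cell model: there are two cells (cell 1 and cell 2) and $2m$ UEs indexed $1,\dots,2m$; UEs $1,\dots,m$ are (originally) served by cell 1 and UEs $m+1,\dots,2m$ by cell 2. Transmit powers per resource block satisfy $p_1=p_2=p>0$; channel gains $g_{ij}>0$ satisfy $g_{1,j}=g_{2,m+j}$ and $g_{1,m+j}=g_{2,j}$ for all $j\in\{1,\dots,m\}$; user demands satisfy $d_j=d_{m+j}>0$; the noise power is $\sigma^2>0$. For each UE $j$ define the constant $c_j=\dfrac{d_j}{\log_2\left(1+\frac{p_1g_{1j}+p_2g_{2j}}{\sigma^2}\right)}$. A JT pattern is $\bm{\kappa}\in\{0,1\}^{2m}$, where $\kappa_j=1$ means UE $j$ is served jointly by both cells. Given $\bm\kappa$ and loads $x_1,x_2$, the UE loads are $y_j=\dfrac{(1-\kappa_j)d_j}{\log_2\left(1+\frac{p_1g_{1j}}{p_2g_{2j}x_2+\sigma^2}\right)}+c_j\kappa_j$ for $j\in\{1,\dots,m\}$ and $y_j=\dfrac{(1-\kappa_j)d_j}{\log_2\left(1+\frac{p_2g_{2j}}{p_1g_{1j}x_1+\sigma^2}\right)}+c_j\kappa_j$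 for $j\in\{m+1,\dots,2m\}$, and the cell loads are coupled via $x_1=\sum_{j=1}^m y_j$, $x_2=\sum_{j=m+1}^{2m}y_j$. The load at convergence for $\bm\kappa$ is a solution $(x_1,x_2)$ of this coupled system (unique when it exists). *)

(* Defs.v *)
From Stdlib Require Import Reals Lra Lia.
Open Scope R_scope.

Definition log2 (x : R) : R := ln x / ln 2.

(* UEs are indexed by 1..2m (nat); g1 j = g_{1j}, g2 j = g_{2j};
   kappa j : bool (true = JT). *)

Definition cJT (p1 p2 sigma2 : R) (g1 g2 d : nat -> R) (j : nat) : R :=
  d j / log2 (1 + (p1 * g1 j + p2 * g2 j) / sigma2).

Definition yload (m : nat) (p1 p2 sigma2 : R) (g1 g2 d : nat -> R)
  (kappa : nat -> bool) (x1 x2 : R) (j : nat) : R :=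
  let k := if kappa j then 1 else 0 in
  if (j <=? m)%nat then
    (1 - k) * d j / log2 (1 + p1 * g1 j / (p2 * g2 j * x2 + sigma2))
    + cJT p1 p2 sigma2 g1 g2 d j * k
  else
    (1 - k) * d j / log2 (1 + p2 * g2 j / (p1 * g1 j * x1 + sigma2))
    + cJT p1 p2 sigma2 g1 g2 d j * k.

Fixpoint sumR (f : nat -> R) (a n : nat) : R :=
  match n with
  | O => 0
  | S n' => sumR f a n' + f (a + n')%nat
  end.
(* sumR f a n = f a + ... + f (a+n-1) *)

Definition is_fixed_point (m : nat) (p1 p2 sigma2 : R) (g1 g2 d : nat -> R)
  (kappa : nat -> bool) (x1 x2 : R) : Prop :=
  x1 = sumR (yload m p1 p2 sigma2 g1 g2 d kappa x1 x2) 1 m /\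
  x2 = sumR (yload m p1 p2 sigma2 g1 g2 d kappa x1 x2) (m + 1) m.

(* Main.v *)
Require Import Defs.
From Stdlib Require Import Reals Lra Lia.
Open Scope R_scope.

Lemma ln_le' x y : 0 < x -> x <= y -> ln x <= ln y.
Proof. intros Hx Hxy. destruct (Rle_lt_or_eq_dec _ _ Hxy) as [H|H].
 - left; apply ln_increasing; lra.
 - subst; lra. Qed.

Lemma mono_term (a b s d x x' : R) : a > 0 -> b > 0 -> s > 0 -> d >= 0 ->
  0 < x -> x <= x' ->
  d / log2 (1 + a / (b * x + s)) <= d / log2 (1 + a / (b * x' + s)).
Proof.
  intros Ha Hb Hs Hd Hx Hxx.
  assert (Hu' : 0 < a / (b * x' + s)).
  { apply Rdiv_lt_0_compat; nra. }
  assert (Hle : a / (b * x' + s) <= a / (b * x + s)).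
  { unfold Rdiv. apply Rmult_le_compat_l; [lra|].
    apply Rinv_le_contravar; nra. }
  assert (Hl2 : 0 < ln 2) by (rewrite <- ln_1; apply ln_increasing; lra).
  assert (HL' : 0 < ln (1 + a / (b * x' + s))).
  { rewrite <- ln_1; apply ln_increasing; lra. }
  assert (HL : ln (1 + a / (b * x' + s)) <= ln (1 + a / (b * x + s))).
  { apply ln_le'; lra. }
  unfold log2.
  replace (d / (ln (1 + a / (b * x + s)) / ln 2)) with (d * ln 2 * / ln (1 + a / (b * x + s))) by (field; lra).
  replace (d / (ln (1 + a / (b * x' + s)) / ln 2)) with (d * ln 2 * / ln (1 + a / (b * x' + s))) by (field; lra).
  apply Rmult_le_compat_l; [nra|]. apply Rinv_le_contravar; lra.
Qed.

Lemma sumR_ext f g a b n : (forall i, (i < n)%nat -> f (a + i)%nat = g (b + i)%nat) ->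
  sumR f a n = sumR g b n.
Proof. induction n; simpl; intros H; auto. rewrite IHn by (intros; apply H; lia).
  rewrite H by lia. reflexivity. Qed.

Lemma sumR_le f g a n : (forall i, (i < n)%nat -> f (a + i)%nat <= g (a + i)%nat) ->
  sumR f a n <= sumR g a n.
Proof. induction n; simpl; intros H; [lra|].
  assert (H1 := H n ltac:(lia)). assert (H2 : sumR f a n <= sumR g a n) by (apply IHn; intros; apply H; lia). lra. Qed.

Theorem lemma1 (m : nat) (p1 p2 p sigma2 : R) (g1 g2 d : nat -> R)
  (kappa : nat -> bool) (x1 x2 : R) :
  p > 0 -> p1 = p -> p2 = p -> sigma2 > 0 ->
  (forall j, (1 <= j <= 2 * m)%nat -> g1 j > 0 /\ g2 j > 0) ->
  (forall j, (1 <= j <= m)%nat -> g1 j = g2 (m + j)%nat /\ g1 (m + j)%nat = g2 j) ->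
  (forall j, (1 <= j <= m)%nat -> d j = d (m + j)%nat /\ d j > 0) ->
  (forall j, (1 <= j <= m)%nat -> kappa j = kappa (m + j)%nat) ->
  x1 > 0 -> x2 > 0 ->
  is_fixed_point m p1 p2 sigma2 g1 g2 d kappa x1 x2 ->
  forall j, (1 <= j <= m)%nat ->
    yload m p1 p2 sigma2 g1 g2 d kappa x1 x2 j =
    yload m p1 p2 sigma2 g1 g2 d kappa x1 x2 (m + j)%nat.
Proof.
  intros Hp E1 E2 Hs Hg Hsym Hd Hk Hx1 Hx2 [F1 F2]. subst p1 p2.
  set (h := fun j x => (1 - (if kappa j then 1 else 0)) * d j /
        log2 (1 + p * g1 j / (p * g2 j * x + sigma2))
        + cJT p p sigma2 g1 g2 d j * (if kappa j then 1 else 0)).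
  assert (HA : forall j, (1 <= j <= m)%nat ->
     yload m p p sigma2 g1 g2 d kappa x1 x2 j = h j x2 /\
     yload m p p sigma2 g1 g2 d kappa x1 x2 (m + j)%nat = h j x1).
  { intros j Hj. destruct (Hsym j Hj) as [S1 S2]. destruct (Hd j Hj) as [D1 _].
    unfold yload, h. split.
    - replace (j <=? m)%nat with true by (symmetry; apply Nat.leb_le; lia). reflexivity.
    - replace (m + j <=? m)%nat with false by (symmetry; apply Nat.leb_gt; lia).
      rewrite <- Hk by lia. rewrite <- S1, <- S2, <- D1.
      unfold cJT. rewrite <- S1, <- S2, <- D1.
      replace (p * g1 (m + j)%nat + p * g1 j) with (p * g1 j + p * g1 (m + j)%nat) by ring. reflexivity. }
  set (H := fun x => sumR (fun i => h i x) 1 m).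
  assert (G1 : x1 = H x2).
  { rewrite F1. unfold H. apply sumR_ext. intros i Hi. apply HA. lia. }
  assert (G2 : x2 = H x1).
  { rewrite F2. unfold H. apply sumR_ext. intros i Hi.
    replace (m + 1 + i)%nat with (m + (1 + i))%nat by lia. apply HA. lia. }
  assert (Hmono : forall x x', 0 < x -> x <= x' -> H x <= H x').
  { intros x x' Hx Hxx. unfold H. apply sumR_le. intros i Hi.
    destruct (Hg (1 + i)%nat ltac:(lia)) as [Ga Gb].
    destruct (Hd (1 + i)%nat ltac:(lia)) as [_ Dp].
    unfold h. destruct (kappa (1 + i)%nat).
    - replace (1 - 1) with 0 by ring. unfold Rdiv. rewrite !Rmult_0_l. lra.
    - replace (1 - 0) with 1 by ring. rewrite !Rmult_1_l.
      apply Rplus_le_compat_r.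
      replace (p * g1 (1 + i)%nat / (p * g2 (1 + i)%nat * x + sigma2)) with
        ((p * g1 (1 + i)%nat) / ((p * g2 (1 + i)%nat) * x + sigma2)) by reflexivity.
      apply mono_term; try nra; lra. }
  assert (Eq : x1 = x2).
  { destruct (Rtotal_order x1 x2) as [L|[L|L]]; auto.
    - pose proof (Hmono x1 x2 Hx1 (Rlt_le _ _ L)). lra.
    - pose proof (Hmono x2 x1 Hx2 (Rlt_le _ _ L)). lra. }
  intros j Hj. destruct (HA j Hj) as [A1 A2]. rewrite A1, A2, Eq. reflexivity.
Qed.
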